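(* In the setting described in the context, let $x\in\operatorname{supp}(\mu)$ be an isolated point of $\operatorname{supp}(\mu)$, and suppose that $K_n(x,x)\neq0$ for all large $n$ and that $\lim_{n\to\infty}G_n[f](x)=f(x)$ for every bounded continuous function $f$ on $\mathbb{R}$. Then \[ \lim_{n\to\infty}K_n(x,x)=\frac{1}{\mu(\{x\})}. \]
   Context: Let $r\ge1$ and let $\mu_1,\dots,\mu_r$ be positive Borel measures on $\mathbb{R}$ with all moments finite, forming a perfect system: for every $\vec n\in\mathbb{N}_0^r$ there is a monic polynomial $P_{\vec n}$ of degree $|\vec n|=n_1+\dots+n_r$ with $\int x^kP_{\vec n}\,d\mu_j=0$ for $0\le k\le n_j-1$, $1\le j\le r$. Type I polynomials $A_{\vec n}=(A_{\vec n,1},\dots,A_{\vec n,r})$: $\deg A_{\vec n,j}\le n_j-1$, $\sum_j\int x^kA_{\vec n,j}\,d\mu_j=0$ for $0\le k\le|\vec n|-2$, and $=1$ for $k=|\vec n|-1$. Let $\mu$ be a positive measure with $\mu_j\ll\mu$, $w_j=d\mu_j/d\mu$, $Q_{\vec n}=\sum_jA_{\vec n,j}w_j$. Fix a path $(\vec n_\ell)_{\ell\ge0}$ with $|\vec n_\ell|=\ell$, $\vec n_{\ell+1}=\vec n_\ell+\vec e_{i_\ell}$ ($\vec e_j$ the $j$-th unit vector), and set $p_\ell=P_{\vec n_\ell}$, $q_\ell=Q_{\vec n_{\ell+1}}$, so that $\int p_\ell q_{\ell'}\,d\mu=\delta_{\ell,\ell'}$. The Christoffel--Darboux kernel is $K_n(x,y)=\sum_{j=0}^{n-1}p_j(x)q_j(y)$.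 For bounded measurable $f$, $x\in\operatorname{supp}(\mu)$ and $K_n(x,x)\ne0$, define $G_n[f](x)=\frac{1}{K_n(x,x)}\int_{\mathbb{R}}K_n(x,y)K_n(y,x)f(y)\,d\mu(y)$. *)

(* Defs.v *)
From HB Require Import structures.
From mathcomp Require Import all_boot all_order all_algebra.
From mathcomp Require Import all_classical all_reals all_analysis.
Set Implicit Arguments. Unset Strict Implicit. Unset Printing Implicit Defensive.
Import Order.TTheory GRing.Theory Num.Theory.
Import numFieldNormedType.Exports.
Local Open Scope classical_set_scope.
Local Open Scope ring_scope.

(* Multi-indices n in N_0^r are functions 'I_r -> nat. *)
Definition mnorm (r : nat) (n : 'I_r -> nat) : nat := (\sum_(j < r) n j)%N.

Definition mvunit (r : nat) (i : 'I_r) : 'I_r -> nat := fun j => (j == i : nat).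

Definition mvadd (r : nat) (n m : 'I_r -> nat) : 'I_r -> nat := fun j => (n j + m j)%N.

Definition msupp (R : realType) (mu : {measure set R -> \bar R}) : set R :=
  [set x | forall e : R, 0 < e -> (0 < mu (ball x e))%E].

Definition isolated_in (R : realType) (S : set R) (x : R) : Prop :=
  S x /\ exists2 e : R, 0 < e & S `&` ball x e = [set x].

Definition Qfun (R : realType) (r : nat) (A : ('I_r -> nat) -> 'I_r -> {poly R})
  (w : 'I_r -> R -> R) (n : 'I_r -> nat) (y : R) : R :=
  \sum_(j < r) (A n j).[y] * w j y.

Definition CDkernel (R : realType) (r : nat) (P : ('I_r -> nat) -> {poly R})
  (A : ('I_r -> nat) -> 'I_r -> {poly R}) (w : 'I_r -> R -> R)
  (nv : nat -> 'I_r -> nat) (n : nat) (x y : R) : R :=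
  \sum_(l < n) (P (nv l)).[x] * Qfun A w (nv l.+1) y.

Definition Gop (R : realType) (mu : {measure set R -> \bar R})
  (K : nat -> R -> R -> R) (n : nat) (f : R -> R) (x : R) : R :=
  (K n x x)^-1 * fine (\int[mu]_y ((K n x y * K n y x * f y)%:E)).

(* Main.v *)
Require Import Defs.
From HB Require Import structures.
From mathcomp Require Import all_boot all_order all_algebra.
From mathcomp Require Import all_classical all_reals all_analysis.
From mathcomp Require Import measurable_realfun.
From mathcomp Require Import ring lra.
Import Order.TTheory GRing.Theory Num.Theory.
Import numFieldNormedType.Exports.
Local Open Scope classical_set_scope.
Local Open Scope ring_scope.

Lemma fineMl (R : realType) (a : R) (m : \bar R) : fine (a%:E * m)%E = a * fine m.
Proof.
case: m => [m| |] /=; first by [].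
- have [a0|a0|->] := ltgtP a 0.
  + by rewrite lt0_muley ?lte_fin // mulr0.
  + by rewrite gt0_muley ?lte_fin // mulr0.
  + by rewrite mul0e mulr0.
- have [a0|a0|->] := ltgtP a 0.
  + by rewrite lt0_muleNy ?lte_fin // mulr0.
  + by rewrite gt0_muleNy ?lte_fin // mulr0.
  + by rewrite mul0e mulr0.
Qed.

Lemma ballE (R : realType) (c e y : R) : ball c e y <-> `|c - y| < e.
Proof. by rewrite -ball_normE. Qed.

Lemma punct_negl (R : realType) (mu : {measure set R -> \bar R}) (x e : R) :
  msupp mu `&` ball x e = [set x] ->
  mu.-negligible (ball x e `\ x).
Proof.
move=> He.
pose F := fun k : nat => match (unpickle k : option (rat * nat)) with
  | Some (q, m) => if (mu (ball (ratr q : R) (m.+1%:R^-1)) == 0)%E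
                   then ball (ratr q : R) (m.+1%:R^-1) else set0
  | None => set0 end.
apply: (@negligibleS _ _ _ _ (\bigcup_k F k)); last first.
  apply: negligible_bigcup => k; rewrite /F.
  case: (unpickle k) => [[q m]|]; last exact: negligible_set0.
  case: ifPn => [/eqP h|_]; last exact: negligible_set0.
  by exists (ball (ratr q : R) (m.+1%:R^-1)); split => //; exact: measurable_ball.
move=> y [yb yx].
have ynS : ~ msupp mu y.
  move=> yS; apply: yx; have : (msupp mu `&` ball x e) y by [].
  by rewrite He.
have [d d0 md] : exists2 d : R, 0 < d & mu (ball y d) = 0%E.
  have [//|hn] := pselect (exists2 d : R, 0 < d & mu (ball y d) = 0%E).
  exfalso; apply: ynS => d d0.
  rewrite lt0e measure_ge0 andbT; apply/negP => /eqP h; apply: hn.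
  by exists d.
have h2d : 0 <= 2 / d :> R by apply: divr_ge0 => //; exact: ltW.
set m := Num.Def.archi_bound (2 / d).
have hm := archi_boundP h2d.
have rpos : 0 < m.+1%:R^-1 :> R by rewrite invr_gt0 ltr0n.
have rd : 2 * m.+1%:R^-1 < d :> R.
  rewrite ltr_pdivrMr ?ltr0n //.
  move: hm; rewrite ltr_pdivrMr // => hm; apply: (lt_le_trans hm).
  by rewrite mulrC ler_pM2l // ler_nat.
set r := (m.+1%:R^-1 : R) in rpos rd *.
have [q] : exists q, ratr q \in `](y - r), (y + r)[.
  apply: rat_in_itvoo; move: rpos; clear; move: r y => r y; lra.
rewrite in_itv /= => /andP[h1 h2].
have hyq : `|ratr q - y| < r.
  rewrite ltr_norml; move: h1 h2; clear; move: (ratr q : R) r y => a r y h1 h2.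
  apply/andP; split; lra.
have sub : ball (ratr q : R) r `<=` ball y d.
  move=> z /ballE hz; apply/ballE.
  have h3 : `|y - ratr q| < r by rewrite distrC.
  have h4 := ler_distD (ratr q) y z.
  move: h3 h4 hz rd; clear; move: (`|y - z|) (`|y - ratr q|) (`|ratr q - z|) => a b c.
  lra.
have m0 : mu (ball (ratr q : R) r) = 0%E.
  apply/eqP; rewrite -measure_le0 -md; apply: le_measure => //; rewrite inE;
  exact: measurable_ball.
exists (pickle (q, m)); first by [].
rewrite /F (pickleK (q, m)) m0 eqxx.
exact/ballE.
Qed.

Lemma bump (R : realType) (x e : R) : 0 < e ->
  exists f : R -> R, [/\ continuous f, (exists M : R, forall y, `|f y| <= M),
    f x = 1 & forall y, ~ ball x e y -> f y = 0].
Proof.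
move=> e0.
exists (fun y => Num.max 0 (1 - `|y - x| / e)); split.
- move=> y.
  have := @continuous_max _ _ (cst 0) (fun y => 1 - `|y - x| / e) y.
  apply.
    exact: cst_continuous.
  apply: cvgB; first exact: cvg_cst.
  apply: cvgMl; apply: cvg_norm; apply: cvgB; [exact: cvg_id|exact: cvg_cst].
- exists 1 => y; rewrite ger0_norm ?le_max ?lexx //.
  rewrite ge_max ler01 /= gerBl divr_ge0 // ltW //.
- by rewrite subrr normr0 mul0r subr0 max_r // ler01.
- move=> y /ballE /negP; rewrite -leNgt => h; apply/max_idPl.
  rewrite subr_le0 ler_pdivlMr // mul1r distrC //.
Qed.

Lemma mhorner (R : realType) (p : {poly R}) : measurable_fun setT (horner p).
Proof. apply: continuous_measurable_fun; exact: continuous_horner. Qed.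

Lemma mQ (R : realType) r (A : ('I_r -> nat) -> 'I_r -> {poly R}) (w : 'I_r -> R -> R) n :
  (forall j, measurable_fun setT (w j)) -> measurable_fun setT (Qfun A w n).
Proof.
move=> hw; rewrite /Qfun.
apply: (measurable_sum _ (h := fun j y => (A n j).[y] * w j y)) => j.
by apply: measurable_funM => //; exact: mhorner.
Qed.

Lemma mK1 (R : realType) r P (A : ('I_r -> nat) -> 'I_r -> {poly R}) (w : 'I_r -> R -> R) nv n x :
  (forall j, measurable_fun setT (w j)) ->
  measurable_fun setT (fun y => CDkernel P A w nv n x y).
Proof.
move=> hw; rewrite /CDkernel.
apply: (measurable_sum _ (h := fun (l : 'I_n) y => (P (nv l)).[x] * Qfun A w (nv l.+1) y)) => l.
by apply: measurable_funM => //; exact: mQ.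
Qed.

Lemma mK2 (R : realType) r P (A : ('I_r -> nat) -> 'I_r -> {poly R}) (w : 'I_r -> R -> R) nv n x :
  measurable_fun setT (fun y => CDkernel P A w nv n y x).
Proof.
rewrite /CDkernel.
apply: (measurable_sum _ (h := fun (l : 'I_n) y => (P (nv l)).[y] * Qfun A w (nv l.+1) x)) => l.
by apply: measurable_funM => //; exact: mhorner.
Qed.

Theorem proposition6 (R : realType) (r : nat) (hr : (0 < r)%N)
  (mu_ : 'I_r -> {measure set R -> \bar R})
  (mu : {measure set R -> \bar R})
  (w : 'I_r -> R -> R)
  (P : ('I_r -> nat) -> {poly R})
  (A : ('I_r -> nat) -> 'I_r -> {poly R})
  (idx : nat -> 'I_r) (nv : nat -> 'I_r -> nat) (x : R) :
  (* all moments of the mu_j are finite *)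
  (forall (j : 'I_r) (k : nat), (mu_ j).-integrable setT (fun y => (y ^+ k)%:E)) ->
  (* perfect system: P n is monic of degree |n| and of type II *)
  (forall n : 'I_r -> nat, P n \is monic) ->
  (forall n : 'I_r -> nat, size (P n) = (mnorm n).+1) ->
  (forall (n : 'I_r -> nat) (j : 'I_r) (k : nat), (k < n j)%N ->
     (\int[mu_ j]_y ((y ^+ k * (P n).[y])%:E) = 0)%E) ->
  (* type I polynomials (for |n| >= 1) *)
  (forall (n : 'I_r -> nat) (j : 'I_r), (0 < mnorm n)%N -> (size (A n j) <= n j)%N) ->
  (forall (n : 'I_r -> nat) (k : nat), (0 < mnorm n)%N -> (k < (mnorm n).-1)%N ->
     (\sum_(j < r) \int[mu_ j]_y ((y ^+ k * (A n j).[y])%:E) = 0)%E) ->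
  (forall (n : 'I_r -> nat), (0 < mnorm n)%N ->
     (\sum_(j < r) \int[mu_ j]_y ((y ^+ (mnorm n).-1 * (A n j).[y])%:E) = 1)%E) ->
  (* mu_j << mu with density w_j = d mu_j / d mu *)
  (forall j : 'I_r, measurable_fun setT (w j)) ->
  (forall (j : 'I_r) (y : R), 0 <= w j y) ->
  (forall (j : 'I_r) (B : set R), measurable B ->
     (mu_ j B = \int[mu]_(y in B) (w j y)%:E)%E) ->
  (* the path (n_l) *)
  nv 0%N = (fun _ => 0%N) ->
  (forall l : nat, nv l.+1 = mvadd (nv l) (mvunit (idx l))) ->
  (* hypotheses on x *)
  isolated_in (msupp mu) x ->
  (\forall n \near \oo, CDkernel P A w nv n x x != 0) ->
  (forall f : R -> R, continuous f -> (exists M : R, forall y, `|f y| <= M) ->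
     (fun n => Gop mu (CDkernel P A w nv) n f x) @ \oo --> f x) ->
  (fun n => CDkernel P A w nv n x x) @ \oo --> (fine (mu [set x]))^-1.

Proof.
move=> _ _ _ _ _ _ _ hw _ _ _ _ [xS [e e0 He]] Knz Hlim.
have Nn := @punct_negl _ _ _ _ He.
have [f [fc fb fx fz]] := @bump _ x e e0.
set K := CDkernel P A w nv in Knz Hlim *.
have xb : ball x e x by apply/ballE; rewrite subrr normr0.
have Hint : forall n, (\int[mu]_y ((K n x y * K n y x * f y)%:E)
    = (K n x x ^+ 2)%:E * mu [set x])%E.
  move=> n.
  rewrite -integral_cst; last exact: measurable_set1.
  rewrite integral_mkcond.
  apply: ae_eq_integral => //.
  - apply/measurable_EFinP; apply: measurable_funM.
      apply: measurable_funM; [exact: mK1|exact: mK2].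
    exact: continuous_measurable_fun.
  - apply/(measurable_restrictT _ (measurable_set1 x)); exact: measurable_cst.
  - apply: (negligibleS _ Nn) => y /= hy; split.
      apply/ballE; apply/negPn/negP => nb; apply: hy => _.
      have ny : ~ ball x e y by move=> /ballE h; rewrite h in nb.
      rewrite fz // mulr0 patchE ifF //; apply/negbTE/negP; rewrite inE => /= yx.
      by apply: ny; move: yx => ->.
    move=> /= yx; apply: hy => _; rewrite yx fx mulr1 patchE ifT ?inE //.
have HG := Hlim f fc fb; rewrite fx in HG.
set c := fine (mu [set x]).
have Geq : \forall n \near \oo, Gop mu K n f x = K n x x * c.
  near=> n; have kn : K n x x != 0 by near: n.
  by rewrite /Gop Hint fineMl -/c expr2 -mulrA mulKf.
have HK : (fun n => K n x x * c) @ \oo --> (1:R).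
  exact: (cvg_trans (near_eq_cvg (f := fun n => Gop mu K n f x) (g := fun n => K n x x * c) Geq) HG).
have c0 : c != 0.
  apply/eqP => c0; move: HK; rewrite c0.
  under eq_fun do rewrite mulr0.
  move=> HK; have h10 : (1:R) = 0 by apply: (cvg_unique (@Rhausdorff R) HK); exact: cvg_cst.
  by move/eqP: h10; rewrite oner_eq0.
have HK2 : (fun n => K n x x * c * c^-1) @ \oo --> 1 * c^-1.
  by apply: cvgM => //; exact: cvg_cst.
rewrite mul1r in HK2.
have -> : (fun n => K n x x) = (fun n => K n x x * c * c^-1).
  by apply/funext => n; rewrite mulfK.
exact: HK2.
Unshelve. all: by end_near.
Qed.
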